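(* Let $a,b\in\mathbb{M}_n$ with $0\le a,b\le 1$ be strict elements such that $a$ is absolutely compatible with $b$. Then $n$ is even, say $n=2k$, and there exist $a_1,\dots,a_k,b_1,\dots,b_k\in\mathcal{S}$ and a unitary $w\in\mathbb{M}_n$ such that $a_i$ is absolutely compatible with $b_i$ for every $i=1,\dots,k$, and $$a=w^*(a_1\oplus\cdots\oplus a_k)w,\qquad b=w^*(b_1\oplus\cdots\oplus b_k)w.$$
   Context: $\mathbb{M}_n$ is the algebra of $n\times n$ complex matrices. For $x$ in it, $|x|=(x^*x)^{1/2}$. Elements $0\le a,b\le 1$ are absolutely compatible if $|a-b|+|1-a-b|=1$. For positive $x$, $r(x)$ is its range projection; for $0\le a\le 1$, $s(a)=1-r(1-a)$ and $n(a)=1-r(a)$; a non-zero $0\le a\le1$ is strict if $s(a)=0=n(a)$. $\mathcal{S}=\{c\in\mathbb{M}_2: 0\le c\le 1,\ \operatorname{trace}(c)=1,\ 0<\det(c)<\tfrac14\}$, with $\operatorname{trace}$ the non-normalized trace. *)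

(* Defs.v *)
From HB Require Import structures.
From Stdlib Require Import ClassicalEpsilon.
From mathcomp Require Import all_boot all_order all_algebra.
From mathcomp Require Import sesquilinear spectral.
From mathcomp Require Import complex.
From mathcomp Require Import reals.
Set Implicit Arguments.
Unset Strict Implicit.
Unset Printing Implicit Defensive.
Import Order.TTheory GRing.Theory Num.Theory.
Local Open Scope ring_scope.
Local Open Scope sesquilinear_scope.

Section Defs.
Variable C : numClosedFieldType.

Definition mx_pos n (x : 'M[C]_n) : Prop :=
  x ^t* = x /\ forall v : 'cV[C]_n, 0 <= (v ^t* *m x *m v) 0 0.

Definition mx_le n (x y : 'M[C]_n) : Prop := mx_pos (y - x).

Definition mx_effect n (a : 'M[C]_n) : Prop := mx_pos a /\ mx_le a 1%:M.

Definition mx_abs n (x : 'M[C]_n) : 'M[C]_n :=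
  epsilon (inhabits 0) (fun s => mx_pos s /\ s *m s = x ^t* *m x).

Definition abs_compatible n (a b : 'M[C]_n) : Prop :=
  mx_abs (a - b) + mx_abs (1%:M - a - b) = 1%:M.

(* range projection r(x): the orthogonal projection onto the range
   (column space) of x; the column space of p is the row space of p^T. *)
Definition range_proj n (x : 'M[C]_n) : 'M[C]_n :=
  epsilon (inhabits 0)
    (fun p => p ^t* = p /\ p *m p = p /\ (p^T == x^T)%MS).

Definition s_proj n (a : 'M[C]_n) : 'M[C]_n := 1%:M - range_proj (1%:M - a).
Definition n_proj n (a : 'M[C]_n) : 'M[C]_n := 1%:M - range_proj a.

Definition strict n (a : 'M[C]_n) : Prop :=
  a != 0 /\ s_proj a = 0 /\ n_proj a = 0.

Definition in_S (c : 'M[C]_2) : Prop :=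
  mx_effect c /\ \tr c = 1 /\ 0 < \det c /\ \det c < 4%:R^-1.

(* block diagonal matrix A 0 (+) A 1 (+) ... with 2x2 blocks, of size n:
   entry (i, j) lies in block i./2 if i./2 = j./2, and is 0 otherwise. *)
Definition dsum2 n (A : nat -> 'M[C]_2) : 'M[C]_n :=
  \matrix_(i < n, j < n)
    if i./2 == j./2 then A i./2 (inord (odd i)) (inord (odd j)) else 0.

End Defs.

(* Main.v *)
Require Import Defs.
From HB Require Import structures.
From Stdlib Require Import ClassicalEpsilon.
From mathcomp Require Import all_boot all_order all_algebra.
From mathcomp Require Import sesquilinear spectral complex reals.
From mathcomp Require Import ring.
Import Order.TTheory GRing.Theory Num.Theory.
Set Implicit Arguments.
Unset Strict Implicit.
Unset Printing Implicit Defensive.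
Local Open Scope ring_scope.
Local Open Scope sesquilinear_scope.

Section Aux.
Variable C : numClosedFieldType.

Lemma tC_mul m n p (A : 'M[C]_(m,n)) (B : 'M[C]_(n,p)) : (A *m B)^t* = B^t* *m A^t*.
Proof. by rewrite trmx_mul map_mxM. Qed.
Lemma tC_add m n (A B : 'M[C]_(m,n)) : (A + B)^t* = A^t* + B^t*.
Proof. by rewrite linearD map_mxD. Qed.
Lemma tC_sub m n (A B : 'M[C]_(m,n)) : (A - B)^t* = A^t* - B^t*.
Proof. by rewrite linearB map_mxB. Qed.
Lemma tC_scalar n (c : C) : (c%:M : 'M[C]_n)^t* = (c^*)%:M.
Proof. by rewrite tr_scalar_mx map_scalar_mx. Qed.
Lemma tC_1 n : (1%:M : 'M[C]_n)^t* = 1%:M.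
Proof. by rewrite tC_scalar conjC1. Qed.
Lemma tC_scale m n (c : C) (A : 'M[C]_(m,n)) : (c *: A)^t* = c^* *: A^t*.
Proof. by rewrite linearZ /= map_mxZ. Qed.
Lemma tC_0 m n : (0 : 'M[C]_(m,n))^t* = 0.
Proof. by rewrite trmx0 map_mx0. Qed.

Lemma cnorm_ge0 n (w : 'cV[C]_n) : 0 <= (w^t* *m w) 0 0.
Proof.
rewrite mxE; apply: sumr_ge0 => k _; rewrite !mxE mulrC; exact: mul_conjC_ge0.
Qed.

Lemma cnorm_eq0 n (w : 'cV[C]_n) : (w^t* *m w) 0 0 = 0 -> w = 0.
Proof.
rewrite mxE => H; apply/matrixP => i j; rewrite ord1 mxE.
have := @psumr_eq0P _ _ predT _ _ H i isT.
rewrite !mxE mulrC => /(_ _)/eqP; rewrite mul_conjC_eq0 => /(_ _)/eqP; apply.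
by move=> k _; rewrite !mxE mulrC; exact: mul_conjC_ge0.
Qed.

End Aux.

Section Aux2.
Variable C : numClosedFieldType.

Lemma pos_compress n m (M : 'M[C]_n) (P : 'M[C]_(n, m)) :
  mx_pos M -> mx_pos (P^t* *m M *m P).
Proof.
move=> [MH Mp]; split.
  by rewrite !tC_mul trmxCK MH mulmxA.
move=> v; have := Mp (P *m v); by rewrite tC_mul !mulmxA.
Qed.

Lemma pos_diag_ge0 n (M : 'M[C]_n) i : mx_pos M -> 0 <= M i i.
Proof.
move=> [_ Mp]; have := Mp (delta_mx i 0).
have -> : (delta_mx i 0 : 'cV[C]_n)^t* = delta_mx 0 i.
  by apply/matrixP => a b; rewrite !mxE rmorph_nat andbC.
by rewrite -rowE -colE !mxE.
Qed.

Lemma pos_diag n (d : 'rV[C]_n) : (forall i, 0 <= d 0 i) -> mx_pos (diag_mx d).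
Proof.
move=> dp; split.
  rewrite tr_diag_mx map_diag_mx; congr diag_mx; apply/matrixP => i j.
  by rewrite ord1 !mxE; exact: geC0_conj.
move=> v; rewrite mul_mx_diag mxE; apply: sumr_ge0 => k _; rewrite !mxE.
by rewrite mulrAC mulr_ge0 // mulrC mul_conjC_ge0.
Qed.

Lemma pos_scalar n (c : C) : 0 <= c -> mx_pos (c%:M : 'M[C]_n).
Proof.
move=> c0; have -> : (c%:M : 'M[C]_n) = diag_mx (const_mx c).
  by apply/matrixP => i j; rewrite !mxE.
by apply: pos_diag => i; rewrite mxE.
Qed.

Lemma mx_col_eq0 n m (A : 'M[C]_(n,m)) : (forall w : 'cV_m, A *m w = 0) -> A = 0.
Proof.
move=> H; apply/matrixP => i j.
by have := congr1 (fun M : 'cV[C]_n => M i 0) (H (delta_mx j 0)); rewrite -colE !mxE.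
Qed.

Lemma psd_kernel n (s : 'M[C]_n) (c : C) (w : 'cV_n) :
  mx_pos s -> 0 < c -> (s + c%:M) *m w = 0 -> w = 0.
Proof.
move=> [_ Hs] c0 H.
have : (w^t* *m (s + c%:M) *m w) 0 0 = 0 by rewrite -mulmxA H mulmx0 mxE.
rewrite mulmxDr mulmxDl mul_mx_scalar -scalemxAl mxE [X in _ + X]mxE.
move/eqP; rewrite paddr_eq0; last 2 first.
- exact: Hs.
- by rewrite mulr_ge0 ?cnorm_ge0 ?ltW.
move=> /andP[_].
by rewrite mulf_eq0 gt_eqF //= => /eqP; apply: cnorm_eq0.
Qed.

Lemma sqrt_unique n (s : 'M[C]_n) c :
  mx_pos s -> s *m s = (c * c)%:M -> 0 <= c -> s = c%:M.
Proof.
move=> sp ss c0.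
have [c0'|cn0] := eqVneq c 0.
  rewrite c0' in ss *; rewrite mul0r in ss.
  have -> : (0%:M : 'M[C]_n) = 0 by apply/matrixP => i j; rewrite !mxE mul0rn.
  apply: mx_col_eq0 => w; apply: cnorm_eq0.
  rewrite tC_mul sp.1 -mulmxA (mulmxA s) ss.
  have -> : (0%:M : 'M[C]_n) = 0 by apply/matrixP => i j; rewrite !mxE mul0rn.
  by rewrite mul0mx mulmx0 mxE.
have cp : 0 < c by rewrite lt_def cn0.
apply/eqP; rewrite -subr_eq0; apply/eqP; apply: mx_col_eq0 => w.
apply: (psd_kernel sp cp).
rewrite mulmxA mulmxDl !mulmxBr ss -scalar_mxM scalar_mxC.
by rewrite addrA subrK subrr mul0mx.
Qed.

Lemma herm_spectral n (A : 'M[C]_n) : A^t* = A ->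
  exists (P : 'M[C]_n) (d : 'rV[C]_n), P \is unitarymx /\ A = P^t* *m diag_mx d *m P.
Proof.
move=> AH; have N : A \is normalmx by apply/normalmxP; rewrite AH.
have := orthomx_spectralP N; rewrite invmx_unitary ?spectral_unitarymx // => E.
by exists (spectralmx A), (spectral_diag A); split => //; exact: spectral_unitarymx.
Qed.

Lemma unitary_l n (P : 'M[C]_n) : P \is unitarymx -> P^t* *m P = 1%:M.
Proof. by move/unitarymxP/mulmx1C. Qed.

Lemma spectral_pos n (A : 'M[C]_n) (P : 'M[C]_n) (d : 'rV[C]_n) : P \is unitarymx -> mx_pos A ->
  A = P^t* *m diag_mx d *m P -> forall i, 0 <= d 0 i.
Proof.
move=> PU Ap AE i.
have : mx_pos (P^t*^t* *m A *m P^t*) by apply: pos_compress.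
rewrite trmxCK AE !mulmxA (unitarymxP PU) mul1mx mulmxtVK //.
by move/(pos_diag_ge0 i); rewrite mxE eqxx mulr1n.
Qed.

Lemma conjU n (P X : 'M[C]_n) : P \is unitarymx -> P *m (P^t* *m X *m P) *m P^t* = X.
Proof. by move=> PU; rewrite !mulmxA (unitarymxP PU) mul1mx mulmxtVK. Qed.

Lemma conjM n (P X Y : 'M[C]_n) : P \is unitarymx ->
  (P^t* *m X *m P) *m (P^t* *m Y *m P) = P^t* *m (X *m Y) *m P.
Proof. by move=> PU; rewrite !mulmxA mulmxtVK // -!mulmxA (mulmxA P) (unitarymxP PU) mul1mx. Qed.

Lemma conj_inj n (P X Y : 'M[C]_n) : P \is unitarymx ->
  P^t* *m X *m P = P^t* *m Y *m P -> X = Y.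
Proof. by move=> PU /(congr1 (fun Z => P *m Z *m P^t*)); rewrite /= !conjU. Qed.

Lemma diag_comm_sq n (M : 'M[C]_n) (d : 'rV[C]_n) : (forall i, 0 <= d 0 i) ->
  M *m (diag_mx d *m diag_mx d) = (diag_mx d *m diag_mx d) *m M ->
  M *m diag_mx d = diag_mx d *m M.
Proof.
move=> dp H'; apply/matrixP => i j; have := congr1 (fun X : 'M[C]_n => X i j) H'.
rewrite /= mulmxA -[in RHS]mulmxA !mul_mx_diag !mul_diag_mx !mxE.
have [->|nij] := eqVneq (d 0 i) (d 0 j); first by move=> _; rewrite mulrC.
move=> /eqP; rewrite -subr_eq0.
have -> : M i j * d 0 j * d 0 j - d 0 i * (d 0 i * M i j) = M i j * (d 0 j ^+ 2 - d 0 i ^+ 2).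
  by rewrite mulrBr !expr2 !mulrA [_ * M i j]mulrC !mulrA.
rewrite mulf_eq0 subr_eq0 eqrXn2 // [d 0 j == _]eq_sym (negbTE nij) orbF => /eqP ->.
by rewrite mul0r mulr0.
Qed.

Lemma comm_sqrt n (s m : 'M[C]_n) : mx_pos s ->
  m *m (s *m s) = (s *m s) *m m -> m *m s = s *m m.
Proof.
move=> sp.
have [P [d [PU E]]] := herm_spectral sp.1.
have dp := spectral_pos PU sp E.
pose m' := P *m m *m P^t*.
have mE : m = P^t* *m m' *m P by rewrite /m' !mulmxA unitary_l // mul1mx -mulmxA unitary_l // mulmx1.
rewrite E mE !conjM // => /conj_inj H'.
by rewrite (diag_comm_sq dp (H' PU)).
Qed.

End Aux2.

Section Aux3.
Variable C : numClosedFieldType.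

Lemma mx_abs_spec n (M : 'M[C]_n) :
  mx_pos (mx_abs M) /\ mx_abs M *m mx_abs M = M^t* *m M.
Proof.
rewrite /mx_abs; apply: (epsilon_spec (inhabits 0) (fun s : 'M[C]_n => mx_pos s /\ s *m s = M^t* *m M)).
have hH : (M^t* *m M)^t* = M^t* *m M by rewrite tC_mul trmxCK.
have hp : mx_pos (M^t* *m M).
  by have := pos_compress M (pos_scalar n (@ler01 C)); rewrite mulmx1.
have [P [d [PU E]]] := herm_spectral hH.
have dp := spectral_pos PU hp E.
pose d' := map_mx sqrtC d.
exists (P^t* *m diag_mx d' *m P); split.
  by apply: pos_compress; apply: pos_diag => i; rewrite mxE sqrtC_ge0.
rewrite conjM // E; congr (_ *m _ *m _).
apply/matrixP => i j; rewrite mul_diag_mx !mxE.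
by case: eqP => [->|]; rewrite ?mulr1n ?mulr0n ?mulr0 // -expr2 sqrtCK.
Qed.

Lemma mx_abs_scalar n (M : 'M[C]_n) c :
  M^t* *m M = (c * c)%:M -> 0 <= c -> mx_abs M = c%:M.
Proof.
move=> MM c0; have [sp ss] := mx_abs_spec M.
by apply: sqrt_unique => //; rewrite ss.
Qed.

Lemma range_proj_spec n (x : 'M[C]_n) :
  (range_proj x)^t* = range_proj x /\ range_proj x *m range_proj x = range_proj x /\
  ((range_proj x)^T == x^T)%MS.
Proof.
rewrite /range_proj; apply: (epsilon_spec (inhabits 0) (fun p : 'M[C]_n => p^t* = p /\ p *m p = p /\ (p^T == x^T)%MS)).
pose B := schmidt (row_base x^T).
have BU : B \is unitarymx by apply: schmidt_unitarymx; exact: rank_leq_col.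
pose Q := B^t* *m B.
have QH : Q^t* = Q by rewrite tC_mul trmxCK.
have QQ : Q *m Q = Q by rewrite /Q mulmxA mulmxtVK.
have BQ : B *m Q = B by rewrite /Q mulmxA (unitarymxP BU) mul1mx.
exists Q^T; split; [|split].
- apply/matrixP => i j; rewrite !mxE.
  by have := congr1 (fun X : 'M[C]_n => X j i) QH; rewrite !mxE.
- by rewrite -trmx_mul QQ.
rewrite trmxK; apply/eqmxP.
have QB : (Q :=: B)%MS.
  apply/eqmxP; rewrite /Q submxMl /= -{1}BQ submxMl //.
apply: eqmx_trans QB _; apply: eqmx_trans (eqmx_schmidt_free (row_base_free _)) _.
exact: eq_row_base.
Qed.

End Aux3.

Section Aux4.
Variable C : numClosedFieldType.

Record Hyp n (a b u : 'M[C]_n) : Prop := {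
 pa : mx_pos a; pa' : mx_pos (1%:M - a); pb : mx_pos b; pb' : mx_pos (1%:M - b);
 pu : mx_pos u; pu' : mx_pos (1%:M - u);
 cua : u *m a = a *m u; cub : u *m b = b *m u;
 sqx : (a - b) *m (a - b) = u *m u;
 sqy : (1%:M - a - b) *m (1%:M - a - b) = (1%:M - u) *m (1%:M - u);
 ka : forall v : 'rV_n, v *m a = 0 -> v = 0;
 ka' : forall v : 'rV_n, v *m (1%:M - a) = 0 -> v = 0;
 kb : forall v : 'rV_n, v *m b = 0 -> v = 0;
 kb' : forall v : 'rV_n, v *m (1%:M - b) = 0 -> v = 0 }.

Lemma stableB m n (V : 'M[C]_(m, n)) f g : stablemx V f -> stablemx V g -> stablemx V (f - g).
Proof. by move=> sf sg; apply: stablemxD => //; rewrite stablemxN. Qed.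

Section Comp.
Variables (r n : nat) (V : 'M[C]_(r, n)).
Hypothesis VV : V *m V^t* = 1%:M.

Lemma comp_proj M : stablemx V M -> V *m M *m V^t* *m V = V *m M.
Proof. by move=> /submxP [K ->]; rewrite -!mulmxA (mulmxA V) VV mul1mx. Qed.

Lemma compM M N : stablemx V M ->
  (V *m M *m V^t*) *m (V *m N *m V^t*) = V *m (M *m N) *m V^t*.
Proof. by move=> sM; rewrite !mulmxA comp_proj // !mulmxA. Qed.

Lemma compB M N : V *m (M - N) *m V^t* = V *m M *m V^t* - V *m N *m V^t*.
Proof. by rewrite mulmxBr mulmxBl. Qed.

Lemma comp1 : V *m 1%:M *m V^t* = 1%:M.
Proof. by rewrite mulmx1. Qed.

Lemma compK M : stablemx V M -> (forall z : 'rV_n, z *m M = 0 -> z = 0) ->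
  forall v : 'rV_r, v *m (V *m M *m V^t*) = 0 -> v = 0.
Proof.
move=> /submxP [K KE] kM v.
rewrite KE -!mulmxA VV mulmx1 => vK.
have : (v *m V) *m M = 0 by rewrite -mulmxA KE mulmxA vK mul0mx.
move/kM => vV0.
by rewrite -[v]mulmx1 -VV mulmxA vV0 mul0mx.
Qed.

Lemma compPos M : mx_pos M -> mx_pos (V *m M *m V^t*).
Proof. by move=> Mp; have := pos_compress (V^t*) Mp; rewrite trmxCK. Qed.

Lemma Hyp_comp (a b u : 'M[C]_n) : Hyp a b u ->
  stablemx V a -> stablemx V b -> stablemx V u ->
  Hyp (V *m a *m V^t*) (V *m b *m V^t*) (V *m u *m V^t*).
Proof.
move=> H sa sb su.
have s1 : stablemx V (1%:M : 'M[C]_n) by exact: stablemxC.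
have e1 X : 1%:M - V *m X *m V^t* = V *m (1%:M - X) *m V^t* by rewrite compB comp1.
split.
- exact: compPos (pa H).
- by rewrite e1; exact: compPos (pa' H).
- exact: compPos (pb H).
- by rewrite e1; exact: compPos (pb' H).
- exact: compPos (pu H).
- by rewrite e1; exact: compPos (pu' H).
- by rewrite !compM // (cua H).
- by rewrite !compM // (cub H).
- rewrite -compB (@compM (a - b) (a - b)); last by rewrite stableB.
  by rewrite (sqx H) compM.
- rewrite !e1 -compB (@compM (1%:M - a - b) (1%:M - a - b)); last by rewrite !stableB.
  by rewrite (sqy H) compM // stableB.
- exact: compK (ka H).
- by rewrite e1; apply: compK (ka' H); rewrite stableB.
- exact: compK (kb H).
- by rewrite e1; apply: compK (kb' H); rewrite stableB.
Qed.

End Comp.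
End Aux4.

Section Aux5.
Variable C : numClosedFieldType.

Lemma no_common n (a b u : 'M[C]_n) (v : 'rV_n) (xi tau mu : C) : Hyp a b u -> v != 0 ->
  v *m (a - b) = xi *: v -> v *m (1%:M - a - b) = tau *: v -> v *m u = mu *: v -> False.
Proof.
move=> H vn0 vx vy vu.
have sq (M : 'M[C]_n) c : v *m M = c *: v -> v *m (M *m M) = (c * c) *: v.
  by move=> vM; rewrite mulmxA vM -scalemxAl vM scalerA.
have scal_inj (c d : C) : c *: v = d *: v -> c = d.
  move/eqP; rewrite -subr_eq0 -scalerBl scaler_eq0 (negbTE vn0) orbF subr_eq0.
  by move/eqP.
have e1 : xi * xi = mu * mu.
  by apply: scal_inj; rewrite -(sq _ _ vx) (sqx H) (sq _ _ vu).
have vu' : v *m (1%:M - u) = (1 - mu) *: v by rewrite mulmxBr mulmx1 vu scalerBl scale1r.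
have e2 : tau * tau = (1 - mu) * (1 - mu).
  by apply: scal_inj; rewrite -(sq _ _ vy) (sqy H) (sq _ _ vu').
have vE (M : 'M[C]_n) (p q r : C) : M = p *: 1%:M + q *: (a - b) + r *: (1%:M - a - b) ->
    v *m M = (p + q * xi + r * tau) *: v.
  move=> ->; rewrite !mulmxDr -!scalemxAr mulmx1 vx vy !scalerA -!scalerDl.
  by [].
have va : v *m a = (2^-1 + 2^-1 * xi + (- 2^-1) * tau) *: v.
  by apply: vE; apply/matrixP => i j; rewrite !mxE; field.
have vb : v *m b = (2^-1 + (- 2^-1) * xi + (- 2^-1) * tau) *: v.
  by apply: vE; apply/matrixP => i j; rewrite !mxE; field.
have va' : v *m (1%:M - a) = (1 - (2^-1 + 2^-1 * xi + (- 2^-1) * tau)) *: v.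
  by rewrite mulmxBr mulmx1 va scalerBl scale1r.
have vb' : v *m (1%:M - b) = (1 - (2^-1 + (- 2^-1) * xi + (- 2^-1) * tau)) *: v.
  by rewrite mulmxBr mulmx1 vb scalerBl scale1r.
have h1 : (xi - mu) * (xi + mu) = 0.
  have -> : (xi - mu) * (xi + mu) = xi * xi - mu * mu by ring.
  by rewrite e1 subrr.
have h2 : (tau - (1 - mu)) * (tau + (1 - mu)) = 0.
  have -> : (tau - (1 - mu)) * (tau + (1 - mu)) = tau * tau - (1 - mu) * (1 - mu) by ring.
  by rewrite e2 subrr.
have kill (M : 'M[C]_n) c : (forall z : 'rV_n, z *m M = 0 -> z = 0) -> v *m M = c *: v -> c = 0 -> False.
  by move=> kM vM c0; move: vM; rewrite c0 scale0r => /kM v0; rewrite v0 eqxx in vn0.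
move: h1 h2 => /eqP; rewrite mulf_eq0 subr_eq0 addr_eq0 => /orP[]/eqP ex /eqP;
  rewrite mulf_eq0 subr_eq0 addr_eq0 => /orP[]/eqP et; rewrite ex et in va vb va' vb'.
- by apply: (kill _ _ (kb H) vb); field.
- by apply: (kill _ _ (ka' H) va'); field.
- by apply: (kill _ _ (ka H) va); field.
- by apply: (kill _ _ (kb' H) vb'); field.
Qed.

End Aux5.

Section Aux6.
Variable C : numClosedFieldType.

Lemma I2 (i : 'I_2) : i = 0 \/ i = 1.
Proof. by case: i => [[|[|//]]] ?; [left|right]; apply: val_inj. Qed.

Lemma lift00 : lift ord0 (ord0 : 'I_1) = 1 :> 'I_2.
Proof. exact: val_inj. Qed.
Lemma ord0_2 : ord0 = 0 :> 'I_2.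
Proof. exact: val_inj. Qed.

Lemma mul2E (M N : 'M[C]_2) i j : (M *m N) i j = M i 0 * N 0 j + M i 1 * N 1 j.
Proof. by rewrite mxE !big_ord_recl big_ord0 addr0 lift00 ord0_2. Qed.

Lemma tr2E (M : 'M[C]_2) : \tr M = M 0 0 + M 1 1.
Proof. by rewrite /mxtrace !big_ord_recl big_ord0 addr0 lift00 ord0_2. Qed.

Lemma det2E (M : 'M[C]_2) : \det M = M 0 0 * M 1 1 - M 0 1 * M 1 0.
Proof.
rewrite (expand_det_row _ 0) !big_ord_recl big_ord0 addr0 /cofactor !det_mx11 !mxE.
rewrite lift00 ord0_2 (_ : lift _ _ = 0 :> 'I_2); last exact: val_inj.
by rewrite /= expr0 expr1 mul1r mulN1r mulrN.
Qed.

Lemma eq2 (M N : 'M[C]_2) : M 0 0 = N 0 0 -> M 0 1 = N 0 1 -> M 1 0 = N 1 0 -> M 1 1 = N 1 1 -> M = N.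
Proof.
move=> e00 e01 e10 e11; apply/matrixP => i j.
by case: (I2 i) => ->; case: (I2 j) => ->.
Qed.


Lemma scalar_mxB' n (a b : C) : ((a - b)%:M : 'M[C]_n) = a%:M - b%:M.
Proof. by apply/matrixP => i j; rewrite !mxE; case: (i == j); rewrite ?mulr1n ?mulr0n ?subr0. Qed.
Lemma scalar_mxD' n (a b : C) : ((a + b)%:M : 'M[C]_n) = a%:M + b%:M.
Proof. by apply/matrixP => i j; rewrite !mxE; case: (i == j); rewrite ?mulr1n ?mulr0n ?addr0. Qed.

Lemma ne01 : (0 == 1 :> 'I_2) = false. Proof. by []. Qed.
Lemma ne10 : (1 == 0 :> 'I_2) = false. Proof. by []. Qed.

Lemma tr_zero (M : 'M[C]_2) s : M *m M = s%:M -> (forall xi, M != xi%:M) -> M 0 0 + M 1 1 = 0.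
Proof.
move=> MM ns; apply/eqP; apply: contraT => t0.
have e01 := congr1 (fun X : 'M[C]_2 => X 0 1) MM.
have e10 := congr1 (fun X : 'M[C]_2 => X 1 0) MM.
have e00 := congr1 (fun X : 'M[C]_2 => X 0 0) MM.
have e11 := congr1 (fun X : 'M[C]_2 => X 1 1) MM.
rewrite /= !mul2E !mxE ?eqxx ?ne01 ?ne10 ?mulr1n ?mulr0n in e01 e10 e00 e11.
have m01 : M 0 1 = 0.
  have : M 0 1 * (M 0 0 + M 1 1) = 0 by rewrite -e01; ring.
  by move/eqP; rewrite mulf_eq0 (negbTE t0) orbF => /eqP.
have m10 : M 1 0 = 0.
  have : M 1 0 * (M 0 0 + M 1 1) = 0 by rewrite -e10; ring.
  by move/eqP; rewrite mulf_eq0 (negbTE t0) orbF => /eqP.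
have m11 : M 1 1 = M 0 0.
  have : (M 0 0 - M 1 1) * (M 0 0 + M 1 1) = 0.
    have -> : (M 0 0 - M 1 1) * (M 0 0 + M 1 1) = (M 0 0 * M 0 0 + M 0 1 * M 1 0) - (M 1 0 * M 0 1 + M 1 1 * M 1 1).
      by rewrite m01 m10; ring.
    by rewrite e00 e11 subrr.
  by move/eqP; rewrite mulf_eq0 (negbTE t0) orbF subr_eq0 => /eqP.
have ME : M = (M 0 0)%:M.
  by apply: eq2; rewrite !mxE ?eqxx ?ne01 ?ne10 ?mulr1n ?mulr0n.
by have := ns (M 0 0); rewrite {1}ME eqxx.
Qed.

Lemma det_psd_ge0 n (A : 'M[C]_n) : mx_pos A -> 0 <= \det A.
Proof.
move=> Ap; have [P [d [PU E]]] := herm_spectral Ap.1.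
have dp := spectral_pos PU Ap E.
have dP : \det (P^t*) * \det P = 1 by rewrite -det_mulmx unitary_l // det1.
rewrite E !det_mulmx mulrAC dP mul1r det_diag.
by apply: prodr_ge0 => i _.
Qed.

Lemma kernel_unit n (M : 'M[C]_n) : (forall v : 'rV_n, v *m M = 0 -> v = 0) -> M \in unitmx.
Proof.
move=> H; rewrite -row_free_unit -kermx_eq0; apply/eqP/row_matrixP => i; rewrite row0.
by apply: H; rewrite -row_mul mulmx_ker row0.
Qed.

Lemma eigvec (M : 'M[C]_2) : exists2 v : 'rV_2, v != 0 & exists c, v *m M = c *: v.
Proof.
have [c /eigenvalueP [v vM vn0]] := eigenvalue_closed M (isT : (0 < 2)%N).
by exists v => //; exists c.
Qed.

Lemma det_lt (M : 'M[C]_2) : M^t* = M -> M 0 0 + M 1 1 = 1 -> M != 2^-1%:M -> \det M < 4^-1.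
Proof.
move=> MH tr1 Mn.
have m10 : M 1 0 = (M 0 1)^* by rewrite -{1}MH !mxE.
have m00 : (M 0 0)^* = M 0 0 by rewrite -{2}MH !mxE.
have m11 : M 1 1 = 1 - M 0 0 by rewrite -tr1; ring.
have c2 : (2^-1 : C)^* = 2^-1 by rewrite fmorphV rmorph_nat.
have E : 4^-1 - \det M = (M 0 0 - 2^-1) * (M 0 0 - 2^-1)^* + M 0 1 * (M 0 1)^*.
  have c3 : (M 0 0 - 2^-1)^* = M 0 0 - 2^-1.
    by rewrite rmorphB; congr (_ - _); [exact: m00|exact: c2].
  by rewrite c3 det2E m11 m10; field.
rewrite -subr_gt0 E lt_def addr_ge0 ?mul_conjC_ge0 // andbT.
apply: contra Mn; rewrite paddr_eq0 ?mul_conjC_ge0 // !mul_conjC_eq0 subr_eq0.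
move=> /andP[/eqP a0 /eqP b0]; apply/eqP; apply: eq2; rewrite !mxE ?eqxx ?ne01 ?ne10 ?mulr1n ?mulr0n //.
- by rewrite m10 b0 conjC0.
- by rewrite m11 a0; field.
Qed.


End Aux6.

Section Aux7.
Variable C : numClosedFieldType.

Lemma base2 (A B U : 'M[C]_2) (nu : C) : Hyp A B U -> U = nu%:M ->
  in_S A /\ in_S B /\ abs_compatible A B.
Proof.
move=> H Ue.
have nu0 : 0 <= nu by have := pos_diag_ge0 0 (pu H); rewrite Ue mxE eqxx mulr1n.
have nu1 : 0 <= 1 - nu by have := pos_diag_ge0 0 (pu' H); rewrite Ue !mxE eqxx !mulr1n.
have AH := (pa H).1; have BH := (pb H).1.
have XH : (A - B)^t* = A - B by rewrite tC_sub AH BH.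
have YH : (1%:M - A - B)^t* = 1%:M - A - B by rewrite !tC_sub tC_1 AH BH.
have XX : (A - B) *m (A - B) = (nu * nu)%:M by rewrite (sqx H) Ue -scalar_mxM.
have YY : (1%:M - A - B) *m (1%:M - A - B) = ((1 - nu) * (1 - nu))%:M.
  by rewrite (sqy H) Ue -scalar_mxB' -scalar_mxM.
have absX : mx_abs (A - B) = nu%:M by apply: mx_abs_scalar; rewrite ?XH.
have absY : mx_abs (1%:M - A - B) = (1 - nu)%:M by apply: mx_abs_scalar; rewrite ?YH.
have vU (v : 'rV[C]_2) : v *m U = nu *: v by rewrite Ue mul_mx_scalar.
have nsX xi : (A - B) != xi%:M.
  apply/negP => /eqP Xe; have [v vn0 [c vc]] := eigvec (1%:M - A - B).
  by apply: (no_common H vn0 _ vc (vU v)); rewrite Xe mul_mx_scalar.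
have nsY xi : (1%:M - A - B) != xi%:M.
  apply/negP => /eqP Ye; have [v vn0 [c vc]] := eigvec (A - B).
  by apply: (no_common H vn0 vc _ (vU v)); rewrite Ye mul_mx_scalar.
have nXY : (A - B) != (1%:M - A - B).
  apply/negP => /eqP Ye; have [v vn0 [c vc]] := eigvec (A - B).
  by apply: (no_common H vn0 vc _ (vU v)); rewrite -Ye vc.
have nXmY : (A - B) != - (1%:M - A - B).
  apply/negP => /eqP Ye; have [v vn0 [c vc]] := eigvec (A - B).
  apply: (no_common (tau := - c) H vn0 vc _ (vU v)).
  by rewrite -[1%:M - A - B]opprK -Ye mulmxN vc scaleNr.
have trX := tr_zero XX nsX.
have trY := tr_zero YY nsY.
have trA : A 0 0 + A 1 1 = 1.
  have -> : A 0 0 + A 1 1 = 1 + 2^-1 * (((A - B) 0 0 + (A - B) 1 1) - ((1%:M - A - B) 0 0 + (1%:M - A - B) 1 1)).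
    by rewrite !mxE !eqxx !mulr1n; field.
  by rewrite trX trY subrr mulr0 addr0.
have trB : B 0 0 + B 1 1 = 1.
  have -> : B 0 0 + B 1 1 = 1 - 2^-1 * (((A - B) 0 0 + (A - B) 1 1) + ((1%:M - A - B) 0 0 + (1%:M - A - B) 1 1)).
    by rewrite !mxE !eqxx !mulr1n; field.
  by rewrite trX trY addr0 mulr0 subr0.
have An : A != 2^-1%:M.
  apply: contra nXY => /eqP Ae; apply/eqP; rewrite Ae; apply/matrixP => i j; rewrite !mxE.
  by case: (i == j); rewrite ?mulr1n ?mulr0n; field.
have Bn : B != 2^-1%:M.
  apply: contra nXmY => /eqP Be; apply/eqP; rewrite Be; apply/matrixP => i j; rewrite !mxE.
  by case: (i == j); rewrite ?mulr1n ?mulr0n; field.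
have detpos (M : 'M[C]_2) : mx_pos M -> (forall v : 'rV_2, v *m M = 0 -> v = 0) -> 0 < \det M.
  move=> Mp Mk; rewrite lt_def det_psd_ge0 // andbT -unitfE -unitmxE.
  exact: kernel_unit.
split; [|split].
- split; first by split; [exact: (pa H)|exact: (pa' H)].
  split; first by rewrite tr2E.
  split; first exact: detpos (pa H) (ka H).
  exact: det_lt.
- split; first by split; [exact: (pb H)|exact: (pb' H)].
  split; first by rewrite tr2E.
  split; first exact: detpos (pb H) (kb H).
  exact: det_lt.
- by rewrite /abs_compatible absX absY -scalar_mxD' addrC subrK.
Qed.

End Aux7.

Section Aux8.
Variable C : numClosedFieldType.

Lemma inord_odd (i : 'I_2) : (inord (odd i) : 'I_2) = i.
Proof. by case: (I2 i) => ->; apply: val_inj; rewrite /= inordK. Qed.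

Lemma dsum2_block r (F : nat -> 'M[C]_2) :
  dsum2 (2 + r) F = block_mx (F 0%N) 0 0 (dsum2 r (fun j => F j.+1)).
Proof.
apply/matrixP => i j; rewrite /dsum2 mxE.
case: (split_ordP i) => i' ->; case: (split_ordP j) => j' ->.
- rewrite block_mxEul /=.
  have h (k : 'I_2) : k./2 = 0%N by case: (I2 k) => ->.
  by rewrite !h eqxx !inord_odd.
- rewrite block_mxEur mxE /=.
  have h (k : 'I_2) : k./2 = 0%N by case: (I2 k) => ->.
  by rewrite h.
- rewrite block_mxEdl mxE /=.
  have h (k : 'I_2) : k./2 = 0%N by case: (I2 k) => ->.
  by rewrite h.
- by rewrite block_mxEdr mxE /= !add0n !negbK eqSS.
Qed.


Lemma col_unitary r1 r2 n (W1 : 'M[C]_(r1, n)) (W2 : 'M[C]_(r2, n)) :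
  col_mx W1 W2 \is unitarymx ->
  [/\ W1 *m W1^t* = 1%:M, W1 *m W2^t* = 0, W2 *m W1^t* = 0 & W2 *m W2^t* = 1%:M].
Proof.
move/unitarymxP; rewrite tr_col_mx map_row_mx mul_col_row (scalar_mx_block r1 r2).
by move/eq_block_mx => [-> -> -> ->].
Qed.

Lemma block_lemma r1 r2 (W1 : 'M[C]_(r1, r1 + r2)) (W2 : 'M[C]_(r2, r1 + r2)) (M : 'M[C]_(r1 + r2)) :
  col_mx W1 W2 \is unitarymx -> M^t* = M -> stablemx W1 M ->
  stablemx W2 M /\
  col_mx W1 W2 *m M *m (col_mx W1 W2)^t* = block_mx (W1 *m M *m W1^t*) 0 0 (W2 *m M *m W2^t*).
Proof.
move=> WU MH /submxP [K KE].
have [V11 V12 V21 V22] := col_unitary WU.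
have e12 : W1 *m M *m W2^t* = 0 by rewrite KE -mulmxA V12 mulmx0.
have e21 : W2 *m M *m W1^t* = 0.
  by have := congr1 (fun X => X^t*) e12; rewrite /= !tC_mul trmxCK MH tC_0 mulmxA.
split.
  have WW := unitary_l WU.
  rewrite tr_col_mx map_row_mx mul_row_col in WW.
  have -> : W2 *m M = W2 *m M *m (W1^t* *m W1 + W2^t* *m W2) by rewrite WW mulmx1.
  by rewrite mulmxDr !mulmxA e21 mul0mx add0r submxMl.
by rewrite tr_col_mx map_row_mx mul_col_mx mul_col_row e12 e21.
Qed.

Lemma block_unitary r1 r2 (w : 'M[C]_r2) : w \is unitarymx ->
  (block_mx (1%:M : 'M[C]_r1) 0 0 w) \is unitarymx.
Proof.
move=> wU; apply/unitarymxP.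
rewrite tr_block_mx map_block_mx mulmx_block !trmx0 !map_mx0 tC_1.
rewrite !(mulmx1, mul1mx, mulmx0, mul0mx, addr0, add0r) (unitarymxP wU).
by rewrite -scalar_mx_block.
Qed.

End Aux8.

Section Aux9.
Variable C : numClosedFieldType.

Lemma row_free2 n (v w : 'rV[C]_n) : v != 0 -> ~~ (w <= v)%MS -> row_free (col_mx v w).
Proof.
move=> vn0 nw; rewrite -kermx_eq0; apply/eqP/row_matrixP => i; rewrite row0.
set r := row i (kermx _).
have rE : r *m col_mx v w = 0 by rewrite /r -row_mul mulmx_ker row0.
rewrite -[r]hsubmxK mul_row_col (mx11_scalar (lsubmx r)) (mx11_scalar (rsubmx r)) !mul_scalar_mx in rE.
have s0 : rsubmx r 0 0 = 0.
  apply/eqP; apply: contraNT nw => sn0.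
  have -> : w = (- (lsubmx r 0 0 / rsubmx r 0 0)) *: v.
    apply: (scalerI sn0); rewrite scalerA mulrN mulrCA divff // mulr1 scaleNr.
    by apply/eqP; rewrite -subr_eq0 opprK addrC rE.
  by rewrite scalemx_sub.
have l0 : lsubmx r 0 0 = 0.
  move: rE; rewrite s0 scale0r addr0 => /eqP; rewrite scaler_eq0 (negbTE vn0) orbF.
  by move/eqP.
by rewrite -[r]hsubmxK (mx11_scalar (lsubmx r)) (mx11_scalar (rsubmx r)) s0 l0 !raddf0 row_mx0.
Qed.


Lemma stableZ m n (V : 'M[C]_(m, n)) (c : C) M : stablemx V M -> stablemx V (c *: M).
Proof. by move=> sM; rewrite -scalemxAr scalemx_sub. Qed.

Lemma step_exists n (a b u : 'M[C]_n) : Hyp a b u -> (0 < n)%N ->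
  exists r1 r2 (W1 : 'M[C]_(r1, n)) (W2 : 'M[C]_(r2, n)) (nu : C),
   [/\ r1 = 2%N, (r1 + r2)%N = n, col_mx W1 W2 \is unitarymx,
       [/\ stablemx W1 a, stablemx W1 b & stablemx W1 u] & W1 *m u = nu *: W1].
Proof.
move=> H n0.
pose x := a - b; pose y := 1%:M - a - b; pose h := x *m y + y *m x.
have cux : u *m x = x *m u by rewrite /x mulmxBr mulmxBl (cua H) (cub H).
have cuy : u *m y = y *m u by rewrite /y !mulmxBr !mulmxBl mulmx1 mul1mx (cua H) (cub H).
have xx : x *m x = u *m u := sqx H.
have cxh : x *m h = h *m x.
  rewrite /h mulmxDr mulmxDl mulmxA xx -(mulmxA y x x) xx addrC !mulmxA; congr (_ + _).
  by rewrite -mulmxA cuy mulmxA cuy.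
have cuh : u *m h = h *m u.
  by rewrite /h mulmxDr mulmxDl !mulmxA cux cuy -!mulmxA cux cuy.
have comm : {in [:: u; x; h] &, forall A B, comm_mx A B}.
  move=> A B; rewrite !inE => /or3P [] /eqP -> /or3P [] /eqP ->; rewrite /comm_mx //.
have [v vn0] := common_eigenvector n0 comm.
rewrite /= andbT => /and3P [/sub_rVP [mu vu] /sub_rVP [xi vx] /sub_rVP [eta vh]].
have vy2 : v *m y *m y = ((1 - mu) * (1 - mu)) *: v.
  have v1u : v *m (1%:M - u) = (1 - mu) *: v by rewrite mulmxBr mulmx1 vu scalerBl scale1r.
  by rewrite -mulmxA (sqy H) mulmxA v1u -scalemxAl v1u scalerA.
have nvy : ~~ (v *m y <= v)%MS.
  by apply/negP => /sub_rVP [tau vy]; exact: (no_common H vn0 vx vy vu).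
pose E := col_mx v (v *m y).
have vE : (v <= E)%MS by rewrite /E -addsmxE addsmxSl.
have vyE : (v *m y <= E)%MS by rewrite /E -addsmxE addsmxSr.
have stE M : (v *m M <= E)%MS -> (v *m y *m M <= E)%MS -> stablemx E M.
  by move=> h1 h2; rewrite /E mul_col_mx col_mx_sub h1 h2.
have sEx : stablemx E x.
  apply: stE; first by rewrite vx scalemx_sub.
  have -> : v *m y *m x = eta *: v + (- xi) *: (v *m y).
    rewrite -mulmxA (_ : y *m x = h - x *m y); last by rewrite /h [x *m y + _]addrC addrK.
    by rewrite mulmxBr vh mulmxA vx -scalemxAl scaleNr.
  by rewrite addmx_sub // scalemx_sub.
have sEy : stablemx E y by apply: stE => //; rewrite vy2 scalemx_sub.
have sEu : stablemx E u.
  apply: stE; first by rewrite vu scalemx_sub.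
  by rewrite -mulmxA -cuy mulmxA vu -scalemxAl scalemx_sub.
have s1 : stablemx E (1%:M : 'M[C]_n) by exact: stablemxC.
have sEa : stablemx E a.
  have -> : a = 2^-1 *: (1%:M + x - y) by apply/matrixP => i j; rewrite !mxE; field.
  by apply: stableZ; apply: stableB => //; apply: stablemxD.
have sEb : stablemx E b.
  have -> : b = 2^-1 *: (1%:M - x - y) by apply/matrixP => i j; rewrite !mxE; field.
  by apply: stableZ; apply: stableB => //; apply: stableB.
have Eu : E *m u = mu *: E.
  by rewrite /E mul_col_mx vu -mulmxA -cuy mulmxA vu -scalemxAl scale_col_mx.
have Efree : row_free E by exact: row_free2.
pose Wc := schmidt_complete E.
pose W1 := usubmx Wc.
have W1E : (W1 :=: E)%MS.
  rewrite /W1 /Wc /schmidt_complete col_mxKu.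
  exact: eqmx_trans (eqmx_schmidt_free (row_base_free _)) (eq_row_base _).
exists (\rank E), _, W1, (dsubmx Wc), mu; split.
- exact/eqP.
- exact: add_rank_ortho.
- by rewrite vsubmxK; exact: (schmidt_complete_unitarymx E).
- by split; rewrite (eqmxMr _ W1E) W1E.
have /submxP [K ->] : (W1 <= E)%MS by rewrite W1E.
by rewrite -mulmxA Eu scalemxAr.
Qed.

End Aux9.

Section Aux10.
Variable C : numClosedFieldType.

Definition Concl n (a b : 'M[C]_n) :=
  exists k : nat, n = (2 * k)%N /\
    exists (A B : nat -> 'M[C]_2) (w : 'M[C]_n),
      (forall j, (j < k)%N ->
         [/\ in_S (A j), in_S (B j) & abs_compatible (A j) (B j)]) /\
      w \is unitarymx /\
      a = w ^t* *m dsum2 n A *m w /\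
      b = w ^t* *m dsum2 n B *m w.

Lemma base0 (a b : 'M[C]_0) : Concl a b.
Proof.
exists 0%N; split => //; exists (fun _ => 0), (fun _ => 0), 1%:M; split => //.
split; first by apply/unitarymxP; rewrite tC_1 mulmx1.
by split; apply/matrixP => -[].
Qed.

Lemma reassemble r1 r2 (W : 'M[C]_(r1 + r2)) (w' : 'M[C]_r2) (M : 'M[C]_(r1 + r2))
    (X1 : 'M[C]_r1) (X2 D2 : 'M[C]_r2) :
  W \is unitarymx -> W *m M *m W^t* = block_mx X1 0 0 X2 -> X2 = w'^t* *m D2 *m w' ->
  M = (block_mx 1%:M 0 0 w' *m W)^t* *m block_mx X1 0 0 D2 *m (block_mx 1%:M 0 0 w' *m W).
Proof.
move=> WU WM X2E.
have E (P Q R : 'M[C]_(r1 + r2)) : (Q *m P)^t* *m R *m (Q *m P) = P^t* *m (Q^t* *m R *m Q) *m P.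
  by rewrite tC_mul !mulmxA.
rewrite E.
have -> : (block_mx 1%:M 0 0 w')^t* *m block_mx X1 0 0 D2 *m block_mx 1%:M 0 0 w' =
          block_mx X1 0 0 X2.
  rewrite tr_block_mx map_block_mx !trmx0 !map_mx0 tC_1 !mulmx_block.
  by rewrite !(mulmx1, mul1mx, mulmx0, mul0mx, addr0, add0r) X2E.
by rewrite -WM !mulmxA unitary_l // mul1mx -mulmxA unitary_l // mulmx1.
Qed.


Lemma main_ind m : forall n (a b u : 'M[C]_n), (n <= m)%N -> Hyp a b u -> Concl a b.
Proof.
elim: m => [|m IH] n a b u nm H.
  have n0 : n = 0%N by apply/eqP; rewrite -leqn0.
  by subst n; exact: base0.
case: (posnP n) => [n0|npos]; first by subst n; exact: base0.
have [r1 [r2 [W1 [W2 [nu [r1E rsum WU [sa sb su] Wu]]]]]] := step_exists H npos.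
subst r1; subst n.
have [V11 V12 V21 V22] := col_unitary WU.
have [sa2 Ea] := block_lemma WU (pa H).1 sa.
have [sb2 Eb] := block_lemma WU (pb H).1 sb.
have [su2 Eu] := block_lemma WU (pu H).1 su.
have H1 := Hyp_comp V11 H sa sb su.
have H2 := Hyp_comp V22 H sa2 sb2 su2.
have U1e : W1 *m u *m W1^t* = nu%:M by rewrite Wu -scalemxAl V11 scalemx1.
have [SA [SB AC]] := base2 H1 U1e.
have r2m : (r2 <= m)%N by rewrite -ltnS (leq_trans _ nm).
have [k' [rk [A' [B' [w' [HAB [w'U [ea eb]]]]]]]] := IH r2 _ _ _ r2m H2.
exists k'.+1; split; first by rewrite rk mulnS.
exists (fun j => if j is j'.+1 then A' j' else W1 *m a *m W1^t*).
exists (fun j => if j is j'.+1 then B' j' else W1 *m b *m W1^t*).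
exists (block_mx 1%:M 0 0 w' *m col_mx W1 W2).
split.
  move=> [|j] jlt /=; first by split; [exact: SA|exact: SB|exact: AC].
  by apply: HAB; rewrite -ltnS.
split; first by apply: mul_unitarymx => //; exact: block_unitary.
rewrite !dsum2_block /=; split.
  exact: (reassemble WU Ea ea).
exact: (reassemble WU Eb eb).
Qed.

End Aux10.

Section Aux11.
Variable C : numClosedFieldType.

Lemma full_range_unit n (x : 'M[C]_n) : range_proj x = 1%:M -> x \in unitmx.
Proof.
move=> E; have [_ [_ ]] := range_proj_spec x; rewrite E trmx1 => /andP [h _].
by rewrite -unitmx_tr -row_full_unit -sub1mx.
Qed.

Lemma unit_kernel n (x : 'M[C]_n) : x \in unitmx -> forall v : 'rV_n, v *m x = 0 -> v = 0.
Proof. by move=> xu v vx; rewrite -[v](mulmxK xu) vx mul0mx. Qed.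

Lemma strict_kernels n (x : 'M[C]_n) : strict x ->
  (forall v : 'rV_n, v *m x = 0 -> v = 0) /\ (forall v : 'rV_n, v *m (1%:M - x) = 0 -> v = 0).
Proof.
move=> [_ [sp np]]; split; apply: unit_kernel; apply: full_range_unit.
  by apply/esym/subr0_eq.
by apply/esym/subr0_eq.
Qed.

Lemma main_general n (a b : 'M[C]_n) :
  mx_effect a -> mx_effect b -> strict a -> strict b ->
  abs_compatible a b -> Concl a b.
Proof.
move=> [ap ap'] [bp bp'] sa sb AC.
have [ka ka'] := strict_kernels sa; have [kb kb'] := strict_kernels sb.
set u := mx_abs (a - b) in AC; set v := mx_abs (1%:M - a - b) in AC.
have [up uu] := mx_abs_spec (a - b); have [vp vv] := mx_abs_spec (1%:M - a - b).
rewrite -/u in up uu; rewrite -/v in vp vv.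
have vE : v = 1%:M - u by rewrite -AC addrC addKr.
rewrite vE in vp vv.
have XH : (a - b)^t* = a - b by rewrite tC_sub ap.1 bp.1.
have YH : (1%:M - a - b)^t* = 1%:M - a - b by rewrite !tC_sub tC_1 ap.1 bp.1.
have cux : (a - b) *m u = u *m (a - b).
  by apply: comm_sqrt => //; rewrite uu XH mulmxA.
have cvy : (1%:M - a - b) *m (1%:M - u) = (1%:M - u) *m (1%:M - a - b).
  by apply: comm_sqrt => //; rewrite vv YH mulmxA.
have cuy : u *m (1%:M - a - b) = (1%:M - a - b) *m u.
  by move: cvy; rewrite [LHS]mulmxBr [RHS]mulmxBl mulmx1 mul1mx => /addrI/oppr_inj.
have aE : a = 2^-1 *: (1%:M + (a - b) - (1%:M - a - b)).
  by apply/matrixP => i j; rewrite !mxE; field.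
have bE : b = 2^-1 *: (1%:M + (- (a - b)) - (1%:M - a - b)).
  by apply/matrixP => i j; rewrite !mxE; field.
have gen (x y : 'M[C]_n) : u *m x = x *m u -> u *m y = y *m u ->
    u *m (1%:M + x - y) = (1%:M + x - y) *m u.
  by move=> h1 h2; rewrite mulmxBr mulmxDr mulmxBl mulmxDl mulmx1 mul1mx h1 h2.
have cua : u *m a = a *m u.
  rewrite aE -scalemxAr -scalemxAl gen //; exact/esym/cux.
have cub : u *m b = b *m u.
  rewrite bE -scalemxAr -scalemxAl gen //; by rewrite mulmxN mulNmx cux.
apply: (@main_ind C n n a b u (leqnn n)); split => //.
- by rewrite uu XH.
- by rewrite vv YH.
Qed.

End Aux11.

Unset Implicit Arguments.

Theorem theorem3p9 (R : realType) (n : nat) (a b : 'M[R[i]]_n) :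
  mx_effect a -> mx_effect b -> strict a -> strict b ->
  abs_compatible a b ->
  exists k : nat, n = (2 * k)%N /\
    exists (A B : nat -> 'M[R[i]]_2) (w : 'M[R[i]]_n),
      (forall j, (j < k)%N ->
         [/\ in_S (A j), in_S (B j) & abs_compatible (A j) (B j)]) /\
      w \is unitarymx /\
      a = w ^t* *m dsum2 n A *m w /\
      b = w ^t* *m dsum2 n B *m w.
Proof. exact: main_general. Qed.
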